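(* With the notation of the context, suppose there are two sample points $\bm x_\alpha,\bm x_\beta$ such that $$\max_{j\in J_{\leq,\alpha}}u_j(\bm x_\beta)<u^*(\bm x_\beta)=u_\beta(\bm x_\beta).$$ Then there exists a point $\bm x_\gamma\in\mathcal{L}(\bm x_\alpha,\bm x_\beta)=\{\lambda\bm x_\alpha+(1-\lambda)\bm x_\beta:\lambda\in(0,1)\}$ and an affine local piece $u_\gamma$ of $u^*$ with $u^*(\bm x_\gamma)=u_\gamma(\bm x_\gamma)$ such that $$u_\gamma(\bm x_\alpha)\le u_\alpha(\bm x_\alpha),\qquad u_\gamma(\bm x_\beta)\ge u_\beta(\bm x_\beta).$$ Moreover, after adding $(\bm x_\gamma,u_\gamma)$ to the sample set (and recomputing $J_{\leq,\alpha}$ accordingly), $\max_{j\in J_{\leq,\alpha}}u_j(\bm x_\beta)\ge u_\beta(\bm x_\beta)$.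
   Context: Let $\Omega\subseteq\mathbb{R}^{n_x}$ be a convex polyhedron and $u^*:\Omega\to\mathbb{R}$ a continuous piecewise affine (PWA) function: $\Omega$ is the union of finitely many closed convex polyhedra (local regions) with pairwise disjoint interiors, and on each local region $u^*$ coincides with an affine function (its local piece). Sample points $\bm x_1,\dots,\bm x_{N_s}\in\Omega$ are given, each lying in the interior of a unique order (UO) region $\Gamma(\bm x_i)$ (a closed polyhedron inside a local region on whose interior the order of all distinct local pieces of $u^*$ is constant), and $u_i$ denotes the local piece of $u^*$ on $\Gamma(\bm x_i)$, so $u_i(\bm x_i)=u^*(\bm x_i)$. Define $J_{\leq,i}=\{j: u_j(\bm x_i)\le u_i(\bm x_i)\}$, where $j$ ranges over the indices of all current sample points. *)

(* Defs.v *)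
From HB Require Import structures.
From mathcomp Require Import all_boot all_order all_algebra.
From mathcomp Require Import all_classical all_reals all_analysis.
Set Implicit Arguments. Unset Strict Implicit. Unset Printing Implicit Defensive.
Import Order.TTheory GRing.Theory Num.Theory.
Import numFieldTopology.Exports numFieldNormedType.Exports.
Local Open Scope classical_set_scope.
Local Open Scope ring_scope.

Section Defs.
Variables (R : realType) (n : nat).
Notation vec := 'rV[R]_n.

Definition affine (f : vec -> R) : Prop :=
  exists (a : 'cV[R]_n) (b : R), forall x, f x = (x *m a) 0 0 + b.

Definition polyhedron (P : set vec) : Prop :=
  exists (m : nat) (A : 'M[R]_(n, m)) (b : 'rV[R]_m),
    P = [set x | forall j : 'I_m, (x *m A) 0 j <= b 0 j].

Definition cont_pwa (Omega : set vec) (ustar : vec -> R) (K : nat)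
    (reg : 'I_K -> set vec) (piece : 'I_K -> vec -> R) : Prop :=
  [/\ polyhedron Omega,
      {within Omega, continuous ustar},
      (forall k, polyhedron (reg k)),
      Omega = \bigcup_(k in setT) reg k &
      [/\ (forall k l, k != l -> interior (reg k) `&` interior (reg l) = set0),
           (forall k, affine (piece k)) &
           (forall k x, reg k x -> ustar x = piece k x)]].

Definition uo_region (K : nat) (reg : 'I_K -> set vec)
    (piece : 'I_K -> vec -> R) (G : set vec) (k : 'I_K) : Prop :=
  [/\ polyhedron G, G `<=` reg k &
      forall p q : 'I_K,
        (forall x, interior G x -> piece p x < piece q x) \/
        (forall x, interior G x -> piece p x = piece q x) \/
        (forall x, interior G x -> piece q x < piece p x)].

Definition Jle (M : nat) (xs : 'I_M -> vec) (us : 'I_M -> vec -> R)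
    (a : 'I_M) : set 'I_M :=
  [set j | us j (xs a) <= us a (xs a)].

Definition extend (T : Type) (M : nat) (f : 'I_M -> T) (t : T) :
    'I_M.+1 -> T :=
  fun j => if unlift ord_max j is Some j' then f j' else t.

Definition open_seg (xa xb : vec) : set vec :=
  [set y | exists2 l : R, 0 < l < 1 & y = l *: xa + (1 - l) *: xb].

End Defs.

(* Main.v *)
Require Import Defs.
From HB Require Import structures.
From mathcomp Require Import all_boot all_order all_algebra.
From mathcomp Require Import all_classical all_reals all_analysis.
From mathcomp Require Import ring lra.
Import Order.TTheory GRing.Theory Num.Theory.
Import numFieldTopology.Exports numFieldNormedType.Exports.
Local Open Scope classical_set_scope.
Local Open Scope ring_scope.

Lemma near_end (R : realType) (n : nat) (G : set 'rV[R]_n) (xa xb : 'rV[R]_n) :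
  interior G xa -> exists2 d : R, 0 <= d < 1 & G (d *: xa + (1 - d) *: xb).
Proof.
move=> /nbhs_ballP [r /= r0 hr].
set N := `|xa - xb|.
have N0 : 0 <= N by apply: normr_ge0.
set e := r / (r + 2 * N + 2).
have den0 : 0 < r + 2 * N + 2 by lra.
have e0 : 0 < e by apply: divr_gt0.
have e1 : e < 1.
  rewrite ltr_pdivrMr // mul1r. lra.
have eN : e * N < r.
  rewrite /e mulrAC ltr_pdivrMr //. nra.
exists (1 - e); first by apply/andP; split; lra.
apply: hr; rewrite -ball_normE /ball_ /=.
have -> : xa - ((1 - e) *: xa + (1 - (1 - e)) *: xb) = e *: (xa - xb).
  have -> : 1 - (1 - e) = e by rewrite opprB addrC subrK.
  by rewrite scalerBl scale1r scalerBr opprD opprB addrA addrCA subrr addr0.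
rewrite normrZ gtr0_norm //.
Qed.

Definition seg {R : realType} {n : nat} (xa xb : 'rV[R]_n) (t : R) :=
  t *: xa + (1 - t) *: xb.

Lemma affine_seg (R : realType) (n : nat) (f : 'rV[R]_n -> R) (xa xb : 'rV[R]_n) (t : R) :
  affine f -> f (seg xa xb t) = t * f xa + (1 - t) * f xb.
Proof.
move=> [a [b hf]]; rewrite !hf /seg mulmxDl -!scalemxAl !mxE; ring.
Qed.

Lemma poly_seg (R : realType) (n : nat) (P : set 'rV[R]_n) (xa xb : 'rV[R]_n) (t : R) :
  polyhedron P -> P xa -> P xb -> 0 <= t <= 1 -> P (seg xa xb t).
Proof.
move=> [m [A [b ->]]] /= ha hb /andP[t0 t1] j.
rewrite /seg mulmxDl -!scalemxAl.
have := ha j; have := hb j.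
move: (xa *m A) (xb *m A) => ma mb h1 h2; rewrite !mxE.
have h3 : 0 <= 1 - t by lra.
have h4 := ler_wpM2l t0 h2. have h5 := ler_wpM2l h3 h1.
lra.
Qed.

Lemma poly_closed (R : realType) (n : nat) (P : set 'rV[R]_n) (xa xb : 'rV[R]_n) (T : R) :
  polyhedron P ->
  (forall e, 0 < e -> exists t, P (seg xa xb t) /\ `|t - T| < e) ->
  P (seg xa xb T).
Proof.
move=> [m [A [b ->]]] /= hcl j.
rewrite leNgt; apply/negP => hT.
have fE : forall t, (seg xa xb t *m A) 0 j = t * (xa *m A) 0 j + (1 - t) * (xb *m A) 0 j.
  move=> t; rewrite /seg mulmxDl -!scalemxAl; move: (xa *m A) (xb *m A) => u v.
  by rewrite !mxE.
rewrite fE in hT.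
have [al alE] : exists al : R, (xa *m A) 0 j = al by eexists.
have [be beE] : exists be : R, (xb *m A) 0 j = be by eexists.
rewrite alE beE in fE hT.
set d := T * al + (1 - T) * be - b 0 j.
have d0 : 0 < d by rewrite /d subr_gt0.
have N0 : 0 <= `|al - be| by apply: normr_ge0.
set eta := d / (`|al - be| + 1).
have eta0 : 0 < eta by apply: divr_gt0 => //; lra.
have [t [ht htT]] := hcl eta eta0.
have := ht j; rewrite fE => hle.
have h1 : (T - t) * (al - be) <= `|T - t| * `|al - be|.
  by rewrite -normrM; apply: ler_norm.
have h2 : `|T - t| = `|t - T| by rewrite distrC.
have h3 : eta * (`|al - be| + 1) = d.
  by rewrite /eta divfK //; apply: lt0r_neq0; lra.
have h4 : `|t - T| * `|al - be| <= eta * `|al - be|.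
  by apply: ler_wpM2r => //; apply: ltW.
have h5 : 0 <= `|t - T| by apply: normr_ge0.
rewrite h2 in h1.
have dE : d = T * al + (1 - T) * be - b 0 j by []. clearbody d eta. lra.
Qed.

Lemma combine_eta (R : realType) (K : nat) (P : 'I_K -> R -> Prop) :
  (forall k e e', 0 < e' <= e -> P k e -> P k e') ->
  (forall k, exists2 e, 0 < e & P k e) ->
  exists2 e, 0 < e & forall k, P k e.
Proof.
move=> mono hk.
suff : forall s : seq 'I_K, exists2 e, 0 < e & forall k, k \in s -> P k e.
  by move=> /(_ (enum 'I_K)) [e e0 he]; exists e => // k; apply: he; rewrite mem_enum.
elim=> [|k s [e e0 he]]; first by exists 1.
have [e1 e10 he1] := hk k.
exists (Num.min e e1); first by rewrite lt_min e0 e10.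
move=> k'; rewrite inE => /orP[/eqP -> | ks].
  by apply: mono he1; rewrite lt_min e0 e10 /= ge_min lexx orbT.
by apply: (mono _ e) (he _ ks); rewrite lt_min e0 e10 /= ge_min lexx.
Qed.

Lemma pigeon (R : realType) (K : nat) (I : 'I_K -> set R) (S : set R) (T : R) :
  (forall k, (forall e, 0 < e -> exists t, I k t /\ `|t - T| < e) -> I k T) ->
  (forall t, S t -> exists k, I k t) ->
  (forall e, 0 < e -> exists t, S t /\ `|t - T| < e) ->
  exists k, I k T /\ exists t, S t /\ I k t.
Proof.
move=> hcl hcov hS.
apply: contrapT => nh.
have [e e0 he] : exists2 e, 0 < e & forall k t, S t -> I k t -> e <= `|t - T|.
  apply: (@combine_eta R K (fun k e => forall t, S t -> I k t -> e <= `|t - T|)).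
    by move=> k e1 e2 /andP[_ h] H t St It; apply: le_trans h (H t St It).
  move=> k.
  have [IT|nIT] := pselect (I k T).
    exists 1 => // t St It; exfalso; apply: nh; exists k; split => //; by exists t.
  have [[e [e0 He]]|nex] := pselect (exists e, 0 < e /\ forall t, I k t -> e <= `|t - T|).
    by exists e => // t _ It; apply: He.
  exfalso; apply: nIT; apply: hcl => e e0.
  apply: contrapT => nt; apply: nex; exists e; split => // t It.
  rewrite leNgt; apply/negP => lt; apply: nt; by exists t.
have [t [St tT]] := hS e e0.
have [k Ik] := hcov t St.
have := he k t St Ik; rewrite leNgt tT //.
Qed.

Theorem mainTheorem3 (R : realType) (n : nat) (Omega : set 'rV[R]_n)
  (ustar : 'rV[R]_n -> R) (K : nat) (reg : 'I_K -> set 'rV[R]_n)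
  (piece : 'I_K -> 'rV[R]_n -> R)
  (N : nat) (xs : 'I_N -> 'rV[R]_n) (Gam : 'I_N -> set 'rV[R]_n)
  (kidx : 'I_N -> 'I_K) (alpha beta : 'I_N) :
  cont_pwa Omega ustar reg piece ->
  (forall i, uo_region reg piece (Gam i) (kidx i)) ->
  (forall i, interior (Gam i) (xs i)) ->
  let us := fun i => piece (kidx i) in
  (forall j, Jle xs us alpha j -> us j (xs beta) < ustar (xs beta)) ->
  exists (xg : 'rV[R]_n) (kg : 'I_K),
    [/\ open_seg (xs alpha) (xs beta) xg,
        reg kg xg,
        ustar xg = piece kg xg,
        piece kg (xs alpha) <= us alpha (xs alpha) &
        piece kg (xs beta) >= us beta (xs beta)] /\
        exists2 j, Jle (extend xs xg) (extend us (piece kg)) (lift ord_max alpha) j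
          & extend us (piece kg) j (xs beta) >= us beta (xs beta).
Proof.
move=> [HO _ Hreg HOU [_ Haff Hpiece]] Huo Hint us Hhyp.
have inreg : forall i, reg (kidx i) (xs i).
  move=> i; have [_ Gsub _] := Huo i; apply: Gsub; exact: interior_subset (Hint i).
have hab : piece (kidx alpha) (xs beta) < ustar (xs beta).
  by apply: (Hhyp alpha); rewrite /Jle /=.
have [del /andP[del0 del1] Gdel] := @near_end _ _ _ _ (xs beta) (Hint alpha).
have regdel : reg (kidx alpha) (seg (xs alpha) (xs beta) del).
  by have [_ Gsub _] := Huo alpha; apply: Gsub.
set xa := xs alpha in hab Gdel regdel *.
set xb := xs beta in hab Gdel regdel *.
set g1 := ustar xa. set g0 := ustar xb.
have g1E : g1 = piece (kidx alpha) xa by apply: Hpiece; apply: inreg.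
have g0E : g0 = piece (kidx beta) xb by apply: Hpiece; apply: inreg.
pose I k t := reg k (seg xa xb t).
pose h t := ustar (seg xa xb t) - (t * g1 + (1 - t) * g0).
have hI : forall k t, I k t ->
    h t = (t * piece k xa + (1 - t) * piece k xb) - (t * g1 + (1 - t) * g0).
  by move=> k t Ikt; rewrite /h (Hpiece k _ Ikt) affine_seg.
have hdel : h del < 0.
  rewrite (hI _ _ regdel) -g1E.
  have : 0 < 1 - del by lra.
  move: hab; rewrite -/g0 => hab h1.
  nra.
have seg0 : seg xa xb 0 = xb by rewrite /seg scale0r add0r subr0 scale1r.
have h0 : h 0 = 0 by rewrite /h seg0 -/g0; lra.
have OmE : forall x, Omega x -> exists k, reg k x.
  by move=> x; rewrite HOU => -[k _ hk]; exists k.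
have Oma : Omega xa by rewrite HOU; exists (kidx alpha).
have Omb : Omega xb by rewrite HOU; exists (kidx beta) => //; apply: inreg.
have cov : forall t, 0 <= t <= 1 -> exists k, I k t.
  by move=> t ht; apply: OmE; apply: poly_seg.
have clo : forall T k, (forall e, 0 < e -> exists t, I k t /\ `|t - T| < e) -> I k T.
  by move=> T k; apply: poly_closed.
pose Z := [set t | (0 <= t <= del) /\ 0 <= h t].
have Z0 : Z 0 by split; [rewrite lexx del0 | rewrite h0].
have hasZ : has_sup Z.
  split; first by exists 0.
  by exists del => t [/andP[_ ->]].
set T := sup Z.
have ubT : forall t, Z t -> t <= T by move=> t Zt; apply: sup_upper_bound.
have T0 : 0 <= T by apply: ubT.
have Tdel : T <= del by apply: ge_sup; [exists 0 | move=> t [/andP[_ ->]]].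
have key : exists k s t, [/\ 0 <= s, s < t, t <= del & [/\ I k s, I k t, 0 <= h s & h t < 0]].
  have [hT|hT] := leP 0 (h T).
    have Tdel' : T < del.
      by rewrite lt_neqAle Tdel andbT; apply/eqP => eTd; move: hT; rewrite eTd; lra.
    have close1 : forall e, 0 < e -> exists t, (T < t /\ t <= del) /\ `|t - T| < e.
      move=> e e0; exists (T + Num.min e (del - T) / 2).
      have m0 : 0 < Num.min e (del - T) by rewrite lt_min e0 subr_gt0 Tdel'.
      have m1 : Num.min e (del - T) <= e by rewrite ge_min lexx.
      have m2 : Num.min e (del - T) <= del - T by rewrite ge_min lexx orbT.
      split; first by split; lra.
      rewrite addrC addKr ger0_norm; lra.
    have cov1 : forall t, T < t /\ t <= del -> exists k, I k t.
      by move=> t [? ?]; apply: cov; apply/andP; split; lra.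
    have [k [IkT [t [[Tt td] Ikt]]]] := @pigeon R K I [set t | T < t /\ t <= del] T
       (clo T) cov1 close1.
    exists k, T, t; split => //; split => //.
    rewrite ltNge; apply/negP => ht.
    have : t <= T by apply: ubT; split => //; apply/andP; split; lra.
    lra.
  have close2 : forall e, 0 < e -> exists t, Z t /\ `|t - T| < e.
    move=> e e0; have [x Zx lx] := sup_adherent e0 hasZ.
    exists x; split => //; have : x <= T by apply: ubT.
    move=> xT; rewrite -/T in lx; rewrite ler0_norm; lra.
  have cov2 : forall t, Z t -> exists k, I k t.
    by move=> t [/andP[? ?] _]; apply: cov; apply/andP; split; lra.
  have [k [IkT [s [[/andP[s0 sd] hs] Iks]]]] := @pigeon R K I Z T (clo T) cov2 close2.
  exists k, s, T; split => //.
  have : s <= T by apply: ubT; split => //; rewrite s0 sd.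
  rewrite le_eqVlt => /orP[/eqP esT|//]; move: hs; rewrite esT; lra.
have [k [s [t [s0 st td [Iks Ikt hs ht]]]]] := key.
rewrite (hI _ _ Iks) in hs; rewrite (hI _ _ Ikt) in ht.
have hA : piece k xa <= g1 by nra.
have hB : g0 <= piece k xb by nra.
have ha : piece k xa <= us alpha xa by rewrite /us -g1E.
have hb : us beta xb <= piece k xb by rewrite /us -g0E.
exists (seg xa xb t), k; split.
  split => //.
  - by exists t => //; apply/andP; split; lra.
  - by apply: Hpiece.
exists ord_max.
  by rewrite /Jle /extend /= liftK unlift_none.
by rewrite /extend unlift_none.
Qed.
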